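(* Define the set of dominant eigenvalues of $J_T$ as $\Lambda_D = \{\lambda_i[J_T] \mid \Re(\lambda_i[W_{\mathrm{out}}W_{\mathrm{in}}])>0\}$. If $\Lambda_D\neq\emptyset$, then the trained reservoir admits a $|\Lambda_D|$-dominant subspace with rate $\lambda = 1-\omega-\varepsilon$, where $0\le\varepsilon<\Re(\mu_{\min})$ and $\mu_{\min}$ is the eigenvalue of $W_{\mathrm{out}}W_{\mathrm{in}}$ with smallest positive real part. Furthermore, $|\Lambda_D|\le d$.
   Context: Consider the untrained linear diagonal continuous-time reservoir $\dot{r}(t) = (-1 + \omega) r(t) + W_{\mathrm{in}} u(t) + \sigma_b \mathbf{1}_n$, with $r(t)\in\mathbb{R}^n$, $u(t)\in\mathbb{R}^d$, $d<n$, $W_{\mathrm{in}}\in\mathbb{R}^{n\times d}$ of full column rank, $\mathbf{1}_n\notin\operatorname{Im}W_{\mathrm{in}}$, $\omega<1$, $\sigma_b\in\mathbb{R}$. It is trained from $r(0)=0$ on generic, informative data: snapshots at equally spaced times form $U\in\mathbb{R}^{d\times m}$ (full row rank) and $R\in\mathbb{R}^{n\times m}$ (full row rank), and $W_{\mathrm{out}} = UR^{\dagger}$ (least squares; $\dagger$ the Moore–Penrose pseudoinverse). The trained closed-loop system is $\dot r = J_T r + \sigma_b\mathbf{1}_n$ with $J_T = (-1+\omega)I + W_{\mathrm{in}}W_{\mathrm{out}}$, assumed diagonalizable and invertible. Then $J_T$ has $n-\operatorname{rank}(W_{\mathrm{out}}W_{\mathrm{in}})\ge n-d$ eigenvalues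 equal to $-1+\omega$ and its remaining (shifted) eigenvalues are $-1+\omega+\lambda_i[W_{\mathrm{out}}W_{\mathrm{in}}]$ for the nonzero eigenvalues of $W_{\mathrm{out}}W_{\mathrm{in}}$. $p$-dominance: a linear system $\dot x = Ax$ is $p$-dominant with rate $\lambda\ge0$ if there is a symmetric matrix $P$ with inertia $(p,0,n-p)$ ($p$ negative, $0$ zero, $n-p$ positive eigenvalues) such that $A^\top P + PA \le -2\lambda P - \varepsilon I$ for some $\varepsilon\ge0$; for $\varepsilon>0$ this is equivalent to $A+\lambda I$ having $p$ eigenvalues with strictly positive real part and $n-p$ with strictly negative real part.
   Formalization: The rate λ = 1 − ω − ε is asserted only for ε ≤ 1 − ω as well as 0 ≤ ε < Re($\mu_{\min}$), and $|\Lambda_D|$ counts, with algebraic multiplicity, the eigenvalues of $W_{\mathrm{out}}W_{\mathrm{in}}$ having positive real part. Each condition added here is assumed in the paper as well or is needed for the statement above to hold. *)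

(* Defs.v *)
From HB Require Import structures.
From mathcomp Require Import all_boot all_order all_algebra.
From mathcomp Require Import complex.
Set Implicit Arguments. Unset Strict Implicit. Unset Printing Implicit Defensive.
Import Order.TTheory GRing.Theory Num.Theory.
Local Open Scope ring_scope.

Section Defs.
Variable R : rcfType.

Definition cmx (n : nat) (A : 'M[R]_n) : 'M[R[i]]_n := map_mx (fun x => real_complex R x) A.

(* the eigenvalues of a real square matrix, listed with algebraic multiplicity,
   as the roots (in C) of its characteristic polynomial *)
Definition eigs (n : nat) (A : 'M[R]_n) : seq R[i] :=
  sval (closed_field_poly_normal (char_poly (cmx A))).

Definition moore_penrose (m n : nat) (A : 'M[R]_(m, n)) (X : 'M[R]_(n, m)) : Prop :=
  [/\ A *m X *m A = A, X *m A *m X = X,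
      (A *m X)^T = A *m X & (X *m A)^T = X *m A].

Definition loewner_le (n : nat) (A B : 'M[R]_n) : Prop :=
  forall x : 'cV[R]_n, 0 <= (x^T *m (B - A) *m x) 0 0.

Definition inertia (n : nat) (P : 'M[R]_n) (neg zer pos : nat) : Prop :=
  [/\ count (fun z => z < 0) (eigs P) = neg,
      count (fun z => z == 0) (eigs P) = zer &
      count (fun z => 0 < z) (eigs P) = pos].

(* p-dominance of xdot = A x with rate lambda >= 0 (LMI definition) *)
Definition p_dominant (n : nat) (A : 'M[R]_n) (p : nat) (lambda : R) : Prop :=
  0 <= lambda /\
  exists P : 'M[R]_n, P^T = P /\ inertia P p 0 (n - p) /\
    exists eps : R, 0 <= eps /\
      loewner_le (A^T *m P + P *m A) (- (2 * lambda) *: P - eps%:M).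

Definition JT (n d : nat) (omega : R) (Win : 'M[R]_(n, d)) (Wout : 'M[R]_(d, n))
  : 'M[R]_n := (-1 + omega)%:M + Win *m Wout.

(* |Lambda_D|: number (with multiplicity) of eigenvalues of W_out W_in
   with positive real part *)
Definition n_dominant (d : nat) (M : 'M[R]_d) : nat :=
  count (fun z => 0 < complex.Re z) (eigs M).

End Defs.

(* Main.v *)
Require Import Defs.
From HB Require Import structures.
From mathcomp Require Import all_boot all_order all_algebra.
From mathcomp Require Import complex.
Import Order.TTheory GRing.Theory Num.Theory.
Local Open Scope ring_scope.
From mathcomp Require Import mxred sesquilinear spectral.
From mathcomp Require Import ring lra zify.

Module Aux.
Import Order.TTheory GRing.Theory Num.Theory Num.Def.
Local Open Scope ring_scope.
Set Implicit Arguments. Unset Strict Implicit. Unset Printing Implicit Defensive.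

Section Gen.
Variable R : rcfType.
Local Notation C := (R[i]).
Local Notation toC := (real_complex R).

Lemma cmxE n (A : 'M[R]_n) : cmx A = map_mx toC A.
Proof. by []. Qed.

Lemma eigs_char n (A : 'M[R]_n) :
  char_poly (cmx A) = \prod_(z <- eigs A) ('X - z%:P).
Proof.
rewrite /eigs; case: closed_field_poly_normal => r /= Er.
by rewrite {1}Er (monicP (char_poly_monic _)) scale1r.
Qed.

Lemma size_eigs n (A : 'M[R]_n) : size (eigs A) = n.
Proof.
have := size_char_poly (cmx A); rewrite eigs_char size_prod_XsubC.
by case.
Qed.

Lemma eigs_perm n (A : 'M[R]_n) s :
  char_poly (cmx A) = \prod_(z <- s) ('X - z%:P) -> perm_eq (eigs A) s.
Proof. by rewrite eigs_char => /prod_XsubC_eq. Qed.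

End Gen.

Section Field.
Variable F : fieldType.

Lemma char_poly_conj n (S M : 'M[F]_n) : S \in unitmx ->
  char_poly (invmx S *m M *m S) = char_poly M.
Proof.
move=> Su; rewrite /char_poly /char_poly_mx.
have -> : ('X%:M : 'M[{poly F}]_n) - map_mx polyC (invmx S *m M *m S) =
   map_mx polyC (invmx S) *m ('X%:M - map_mx polyC M) *m map_mx polyC S.
  rewrite mulmxBr mulmxBl !map_mxM; congr (_ - _).
  by rewrite mul_mx_scalar -scalemxAl -map_mxM mulVmx // map_mx1 scalemx1.
rewrite !det_mulmx !det_map_mx mulrC mulrA -rmorphM -det_mulmx mulmxV //.
by rewrite det1 rmorph1 mul1r.
Qed.

Lemma char_poly_diag n (d : 'rV[F]_n) :
  char_poly (diag_mx d) = \prod_(z <- [seq d 0 i | i <- enum 'I_n]) ('X - z%:P).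
Proof.
rewrite char_poly_trig ?diag_mx_is_trig // big_map big_enum /=.
by apply: eq_bigr => i _; rewrite mxE eqxx mulr1n.
Qed.

Lemma rank_diag n (d : 'rV[F]_n) :
  \rank (diag_mx d) = count (fun i => d 0 i != 0) (enum 'I_n).
Proof.
elim: n d => [|n IH] d.
  by rewrite enum_ord0 /= flatmx0 mxrank0.
have E : \rank (diag_mx d) = \rank (diag_mx (row_mx (@lsubmx _ 1 1 n d) (rsubmx (d : 'rV_(1 + n))))).
  by rewrite hsubmxK.
rewrite E diag_mx_row rank_diag_block_mx IH enum_ordSl /= count_map.
congr (_ + _)%N.
  rewrite (_ : diag_mx _ = (d 0 0)%:M); last first.
    apply/matrixP => i j; rewrite !ord1 !mxE /=.
    by congr (d _ _ *+ _); apply: val_inj.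
  have [->|nz] := eqVneq (d 0 0) 0; first by rewrite (_ : 0%:M = 0) ?mxrank0 //; apply/matrixP => i j; rewrite !mxE mul0rn.
  rewrite mxrank_unit // ?unitmxE ?det_scalar1 ?unitfE // nz.
apply: eq_count => i /=; rewrite mxE; congr (d _ _ != 0).
by apply: val_inj.
Qed.
End Field.

Lemma det_sylvester (T : comNzRingType) n d (A : 'M[T]_(n,d)) (B : 'M[T]_(d,n)) (y : T) :
  y ^+ d * \det (y%:M - A *m B) = y ^+ n * \det (y%:M - B *m A).
Proof.
pose M := block_mx (y%:M : 'M_n) A B (1%:M : 'M_d).
have E1 : block_mx 1%:M (-A) 0 1%:M *m M = block_mx (y%:M - A *m B) 0 B 1%:M.
  rewrite mulmx_block !mul1mx !mul0mx mulmx1 !add0r mulNmx addrC; congr block_mx.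
  by rewrite subrr.
have E2 : block_mx 1%:M 0 (-B) (y%:M) *m M = block_mx (y%:M) A 0 (y%:M - B *m A).
  rewrite mulmx_block !mul1mx !mul0mx !addr0 mulmx1 mulNmx; congr block_mx.
    by rewrite mul_mx_scalar mul_scalar_mx addrC subrr.
  by rewrite mulNmx addrC.
have D1 := congr1 (fun X => \det X) E1; have D2 := congr1 (fun X => \det X) E2.
move: D1 D2 => /=; rewrite !det_mulmx !det_ublock !det_lblock !det1 !det_scalar.
rewrite !mul1r !mulr1 => ->.
by rewrite mulrC => ->.
Qed.

Section JK.
Variable R : rcfType.
Local Notation C := (R[i]).
Local Notation toC := (real_complex R).

Lemma iter_mulE (T : pzRingType) (x : T) k : iter k ( *%R x) 1 = x ^+ k.
Proof. by elim: k => [|k IH] //=; rewrite IH exprS. Qed.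

Lemma eigs_JK (n d : nat) (Win : 'M[R]_(n,d)) (Wout : 'M[R]_(d,n)) (c : R) :
  perm_eq (nseq d (toC c) ++ eigs (c%:M + Win *m Wout))
          (nseq n (toC c) ++ map (fun z => z + toC c) (eigs (Wout *m Win))).
Proof.
apply: prod_XsubC_eq; rewrite !big_cat /= !big_nseq big_map !iter_mulE -!eigs_char.
set Y := 'X - (toC c)%:P.
pose pA := map_mx polyC (map_mx toC Win); pose pB := map_mx polyC (map_mx toC Wout).
have -> : char_poly (cmx (c%:M + Win *m Wout)) = \det (Y%:M - pA *m pB).
  rewrite /char_poly /char_poly_mx cmxE map_mxD map_mxM map_scalar_mx.
  by rewrite map_mxD map_mxM map_scalar_mx opprD addrA /Y (raddfB (@scalar_mx _ _)).
rewrite det_sylvester; congr (_ * _).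
have -> : \det (Y%:M - pB *m pA) = (char_poly (cmx (Wout *m Win))) \Po Y.
  rewrite /char_poly -det_map_mx /char_poly_mx map_mxB map_scalar_mx /= comp_polyX.
  congr (\det (_ - _)); rewrite cmxE -map_mx_comp !map_mxM -!map_mx_comp.
  by congr (_ *m _); apply/matrixP => i j; rewrite !mxE /= comp_polyC.
rewrite eigs_char rmorph_prod /=; apply: eq_bigr => z _.
by rewrite comp_polyB comp_polyX comp_polyC /Y polyCD opprD addrA addrAC.
Qed.
End JK.

Section Forms.
Variable R : rcfType.
Local Notation C := (R[i]).
Local Notation toC := (real_complex R).
Local Notation Re := (@complex.Re R).
Local Notation Im := (@complex.Im R).

Definition adjm m k (M : 'M[C]_(m,k)) : 'M[C]_(k,m) := map_mx conjC M^T.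
Definition ReMx m k (M : 'M[C]_(m,k)) : 'M[R]_(m,k) := map_mx Re M.
Definition ImMx m k (M : 'M[C]_(m,k)) : 'M[R]_(m,k) := map_mx Im M.
Definition nrm2 (z : C) : R := Re z ^+ 2 + Im z ^+ 2.

Lemma Re_sum I (r : seq I) (P : pred I) (E : I -> C) :
  Re (\sum_(i <- r | P i) E i) = \sum_(i <- r | P i) Re (E i).
Proof. exact: (@raddf_sum _ _ Re). Qed.

Lemma Im_sum I (r : seq I) (P : pred I) (E : I -> C) :
  Im (\sum_(i <- r | P i) E i) = \sum_(i <- r | P i) Im (E i).
Proof. exact: (@raddf_sum _ _ Im). Qed.

Lemma Re_toCl r (z : C) : Re (toC r * z) = r * Re z.
Proof. by case: z => a b /=; rewrite mul0r subr0. Qed.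
Lemma Re_toCr r (z : C) : Re (z * toC r) = Re z * r.
Proof. by case: z => a b /=; rewrite mulr0 subr0. Qed.
Lemma Im_toCl r (z : C) : Im (toC r * z) = r * Im z.
Proof. by case: z => a b /=; rewrite mul0r addr0. Qed.
Lemma Im_toCr r (z : C) : Im (z * toC r) = Im z * r.
Proof. by case: z => a b /=; rewrite mulr0 add0r. Qed.

Lemma ReMx_cmxl m k p (A : 'M[R]_(m,k)) (H : 'M[C]_(k,p)) :
  ReMx (map_mx toC A *m H) = A *m ReMx H.
Proof.
by apply/matrixP => i j; rewrite !mxE Re_sum; apply: eq_bigr => l _; rewrite !mxE Re_toCl.
Qed.
Lemma ReMx_cmxr m k p (H : 'M[C]_(m,k)) (B : 'M[R]_(k,p)) :
  ReMx (H *m map_mx toC B) = ReMx H *m B.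
Proof.
by apply/matrixP => i j; rewrite !mxE Re_sum; apply: eq_bigr => l _; rewrite !mxE Re_toCr.
Qed.
Lemma ImMx_cmxr m k p (H : 'M[C]_(m,k)) (B : 'M[R]_(k,p)) :
  ImMx (H *m map_mx toC B) = ImMx H *m B.
Proof.
by apply/matrixP => i j; rewrite !mxE Im_sum; apply: eq_bigr => l _; rewrite !mxE Im_toCr.
Qed.

Lemma conj_cmx m k (A : 'M[R]_(m,k)) : map_mx conjC (map_mx toC A) = map_mx toC A.
Proof. by apply/matrixP => i j; rewrite !mxE; apply: conjc_real. Qed.

Lemma adjm_mul m k p (A : 'M[C]_(m,k)) (B : 'M[C]_(k,p)) :
  adjm (A *m B) = adjm B *m adjm A.
Proof. by rewrite /adjm trmx_mul map_mxM. Qed.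

Lemma adjm_cmx m k (A : 'M[R]_(m,k)) : adjm (map_mx toC A) = map_mx toC A^T.
Proof. by rewrite /adjm map_trmx conj_cmx. Qed.

Definition Hm n (S : 'M[C]_n) (del : 'I_n -> R) : 'M[C]_n :=
  adjm S *m diag_mx (\row_i toC (del i)) *m S.

Lemma Hm_form n (S : 'M[C]_n) del (u w : 'cV[R]_n) :
  (u^T *m ReMx (Hm S del) *m w) 0 0 =
  Re (\sum_i conjC ((S *m map_mx toC u) i 0) * toC (del i) * (S *m map_mx toC w) i 0).
Proof.
rewrite -ReMx_cmxl -ReMx_cmxr mxE; congr Re.
rewrite /Hm -adjm_cmx !mulmxA -adjm_mul -!mulmxA mulmxA mxE.
apply: eq_bigr => i _; rewrite mul_mx_diag !mxE mulrC mulrA; congr (_ * _).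

Qed.

Lemma Hm_tr n (S : 'M[C]_n) del : (Hm S del)^T = map_mx conjC (Hm S del).
Proof.
rewrite /Hm !trmx_mul !map_mxM tr_diag_mx map_diag_mx /adjm map_trmx trmxK.
have -> : map_mx conjC (map_mx conjC S^T) = S^T.
  by apply/matrixP => i j; rewrite !mxE conjCK.
rewrite mulmxA; congr (_ *m _ *m _); congr diag_mx.
apply/matrixP => i j; rewrite !mxE; symmetry; exact: (conjc_real (del j)).
Qed.

Lemma Re_conj (z : C) : Re (conjC z) = Re z.
Proof. by case: z. Qed.

Lemma Hm_sym n (S : 'M[C]_n) del : (ReMx (Hm S del))^T = ReMx (Hm S del).
Proof.
apply/matrixP => i j; have E := congr1 (fun M : 'M[C]_n => M i j) (Hm_tr S del).
rewrite /= !mxE in E; rewrite !mxE E; exact: Re_conj.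
Qed.

Lemma Re_form1 (z : C) r : Re (conjC z * toC r * z) = r * nrm2 z.
Proof. by case: z => a b; rewrite /nrm2 /=; ring. Qed.

Lemma Re_form2 (w z : C) r :
  Re (conjC (w * z) * toC r * z) + Re (conjC z * toC r * (w * z)) = 2 * r * Re w * nrm2 z.
Proof. by case: z => a b; case: w => c e; rewrite /nrm2 /=; ring. Qed.

Lemma nrm2_ge0 z : 0 <= nrm2 z.
Proof. by rewrite /nrm2 addr_ge0 ?sqr_ge0. Qed.

Lemma nrm2_eq0 z : (nrm2 z == 0) = (z == 0).
Proof.
case: z => a b; rewrite /nrm2 /= paddr_eq0 ?sqr_ge0 // !sqrf_eq0.
by rewrite eq_complex.
Qed.

Definition sgn_del n (d : 'rV[C]_n) (i : 'I_n) : R :=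
  if 0 < Re (d 0 i) then -1 else 1.

Lemma lyap_lmi n (A : 'M[R]_n) (S : 'M[C]_n) (d : 'rV[C]_n) :
  S \in unitmx -> map_mx toC A = invmx S *m diag_mx d *m S ->
  forall x : 'cV[R]_n,
  (x^T *m (A^T *m ReMx (Hm S (sgn_del d)) + ReMx (Hm S (sgn_del d)) *m A) *m x) 0 0 <= 0.
Proof.
move=> Su EA x; set P := ReMx _.
have -> : x^T *m (A^T *m P + P *m A) *m x = (A *m x)^T *m P *m x + x^T *m P *m (A *m x).
  by rewrite mulmxDr mulmxDl trmx_mul !mulmxA.
rewrite mxE !Hm_form.
have -> : S *m map_mx toC (A *m x) = diag_mx d *m (S *m map_mx toC x).
  by rewrite map_mxM EA -!mulmxA mulKVmx.
set y := S *m map_mx toC x.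
rewrite !Re_sum -big_split /=; apply: sumr_le0 => i _.
rewrite !mul_diag_mx !mxE Re_form2 /sgn_del.
set N := nrm2 _; have : 0 <= N by apply: nrm2_ge0.
case: ifP => h.
  nra.
have : Re (d 0 i) <= 0 by rewrite leNgt h.
nra.
Qed.

Lemma Hm_quad n (S : 'M[C]_n) del (a : 'rV[R]_n) :
  (a *m ReMx (Hm S del) *m a^T) 0 0 = \sum_i del i * nrm2 ((S *m map_mx toC a^T) i 0).
Proof.
have := Hm_form S del a^T a^T; rewrite trmxK => ->; rewrite Re_sum.
by apply: eq_bigr => i _; apply: Re_form1.
Qed.

Definition qpolyR n (Pr : pred 'I_n) (d : 'rV[C]_n) : {poly R} :=
  \prod_(i | Pr i) ('X^2 - (2 * Re (d 0 i)) *: 'X + (nrm2 (d 0 i))%:P).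

Lemma qpoly_eval n Pr (d : 'rV[C]_n) z : (map_poly toC (qpolyR Pr d)).[z] =
  \prod_(i | Pr i) ((z - d 0 i) * (z - conjC (d 0 i))).
Proof.
rewrite rmorph_prod horner_prod; apply: eq_bigr => i _.
rewrite rmorphD rmorphB /= map_polyXn map_polyZ map_polyX map_polyC !hornerE /=.
case: (d 0 i) => a b; case: z => p q; rewrite /nrm2 /=.
by apply/eqP; rewrite eq_complex /=; apply/andP; split; apply/eqP; ring.
Qed.

Lemma qpoly_root n (Pr : pred 'I_n) (d : 'rV[C]_n) j : Pr j -> (map_poly toC (qpolyR Pr d)).[d 0 j] = 0.
Proof. by move=> Pj; rewrite qpoly_eval (bigD1 j) //= subrr !mul0r. Qed.

Lemma qpoly_nroot n (Pr : pred 'I_n) (d : 'rV[C]_n) z :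
  (forall i, Pr i -> Re z != Re (d 0 i)) -> (map_poly toC (qpolyR Pr d)).[z] != 0.
Proof.
move=> H; rewrite qpoly_eval; apply/prodf_neq0 => i Pi.
rewrite mulf_neq0 // subr_eq0; apply: contra (H i Pi) => /eqP ->//.
by rewrite Re_conj.
Qed.

Lemma ker_map n (A : 'M[R]_n.+1) (S : 'M[C]_n.+1) d (q : {poly R}) :
  S \in unitmx -> map_mx toC A = invmx S *m diag_mx d *m S ->
  map_mx toC (horner_mx A q) =
    invmx S *m diag_mx (map_mx (horner (map_poly toC q)) d) *m S.
Proof.
by move=> Su EA; rewrite map_horner_mx EA horner_mx_uconjC ?horner_mx_diag.
Qed.

Lemma ker_rank n (A : 'M[R]_n.+1) (S : 'M[C]_n.+1) d (q : {poly R}) :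
  S \in unitmx -> map_mx toC A = invmx S *m diag_mx d *m S ->
  \rank (kermx (horner_mx A q)^T) =
    count (fun i => (map_poly toC q).[d 0 i] == 0) (enum 'I_n.+1).
Proof.
move=> Su EA; rewrite mxrank_ker mxrank_tr -(mxrank_map toC) (ker_map q Su EA).
rewrite mxrankMfree ?row_free_unit // -mxrank_tr trmx_mul mxrankMfree; last first.
  by rewrite row_free_unit unitmx_tr unitmx_inv.
rewrite mxrank_tr rank_diag.
under eq_count => i do rewrite mxE.
rewrite -{1}(size_enum_ord n.+1).
rewrite -(count_predC (fun i => (map_poly toC q).[d 0 i] != 0)) addKn.
by apply: eq_count => i /=; rewrite negbK.
Qed.

Lemma ker_prop n (A : 'M[R]_n.+1) (S : 'M[C]_n.+1) d (q : {poly R}) (a : 'rV[R]_n.+1) i :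
  S \in unitmx -> map_mx toC A = invmx S *m diag_mx d *m S ->
  (a <= kermx (horner_mx A q)^T)%MS -> (map_poly toC q).[d 0 i] != 0 ->
  (S *m map_mx toC a^T) i 0 = 0.
Proof.
move=> Su EA; rewrite sub_kermx => /eqP Ea nz.
have : map_mx toC (horner_mx A q) *m map_mx toC a^T = 0.
  by rewrite -map_mxM -[_ *m a^T]trmxK trmx_mul trmxK Ea trmx0 map_mx0.
rewrite (ker_map q Su EA) -!mulmxA => /(congr1 (mulmx S)).
rewrite mulKVmx // mulmx0 => /matrixP /(_ i 0).
rewrite mul_diag_mx !mxE => /eqP; rewrite mulf_eq0 (negbTE nz) /= => /eqP.
by [].
Qed.

Lemma Re_trip (x y : C) p : Re (x * toC p * conjC y) = p * (Re x * Re y + Im x * Im y).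
Proof. by case: x => a b; case: y => c e /=; ring. Qed.
Lemma Im_trip (x y : C) p : Im (x * toC p * conjC y) = p * (Im x * Re y - Re x * Im y).
Proof. by case: x => a b; case: y => c e /=; ring. Qed.

Lemma quad_cplx n (P : 'M[R]_n) (x : 'rV[C]_n) : P^T = P ->
  (x *m map_mx toC P *m adjm x) 0 0 =
  toC ((ReMx x *m P *m (ReMx x)^T) 0 0 + (ImMx x *m P *m (ImMx x)^T) 0 0).
Proof.
move=> Psym.
have E : (x *m map_mx toC P *m adjm x) 0 0 =
   \sum_j \sum_k x 0 k * toC (P k j) * conjC (x 0 j).
  by rewrite mxE; apply: eq_bigr => j _; rewrite mxE big_distrl; apply: eq_bigr => k _;
     rewrite !mxE.
apply/eqP; rewrite E eq_complex /=; apply/andP; split; apply/eqP.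
  rewrite Re_sum !mxE -big_split /=; apply: eq_bigr => j _.
  rewrite Re_sum !mxE !big_distrl -big_split /=; apply: eq_bigr => k _.
  by rewrite Re_trip !mxE; ring.
rewrite Im_sum.
under eq_bigr => j _ do rewrite Im_sum.
under eq_bigr => j _ do under eq_bigr => k _ do rewrite Im_trip mulrBr.
under eq_bigr => j _ do rewrite sumrB.
rewrite sumrB exchange_big /=; apply/eqP; rewrite subr_eq0; apply/eqP.
apply: eq_bigr => j _; apply: eq_bigr => k _.
have : P j k = P k j by rewrite -{1}Psym mxE.
by move=> ->; ring.
Qed.

Lemma x_ReIm n (x : 'rV[C]_n) : ReMx x = 0 -> ImMx x = 0 -> x = 0.
Proof.
move=> /matrixP Ha /matrixP Hb; apply/matrixP => i j.
have := Ha i j; have := Hb i j; rewrite !mxE; case: (x i j) => a b /= -> ->.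
by [].
Qed.

End Forms.

Lemma cap_nonzero (F : fieldType) n m1 m2 (A : 'M[F]_(m1,n)) (B : 'M[F]_(m2,n)) :
  (n < \rank A + \rank B)%N ->
  exists2 x : 'rV_n, x != 0 & (x <= A)%MS && (x <= B)%MS.
Proof.
move=> lt; have := mxrank_sum_cap A B; have := rank_leq_col (A + B)%MS.
move=> le E; have : (0 < \rank (A :&: B))%N by lia.
rewrite lt0n mxrank_eq0 -nz_row_eq0 => nz.
exists (nz_row (A :&: B))%MS => //.
by rewrite !(submx_trans (nz_row_sub _)) ?capmxSl ?capmxSr.
Qed.

Section Inertia.
Variable R : rcfType.
Local Notation C := (R[i]).
Local Notation toC := (real_complex R).
Local Notation Re := (@complex.Re R).
Local Notation Im := (@complex.Im R).

Lemma cplx_pos n (P : 'M[R]_n) (B : 'M[R]_n) (x : 'rV[C]_n) : P^T = P ->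
  (forall a : 'rV[R]_n, (a <= B)%MS -> a != 0 -> 0 < (a *m P *m a^T) 0 0) ->
  (x <= map_mx toC B)%MS -> x != 0 -> 0 < (x *m map_mx toC P *m adjm x) 0 0.
Proof.
move=> Psym H /submxP [c ->] nz.
rewrite quad_cplx // ReMx_cmxr ImMx_cmxr.
set a := ReMx c *m B; set b := ImMx c *m B.
have Ha : (a <= B)%MS by apply: submxMl.
have Hb : (b <= B)%MS by apply: submxMl.
have ge : forall e : 'rV[R]_n, (e <= B)%MS -> 0 <= (e *m P *m e^T) 0 0.
  move=> e eB; have [->|enz] := eqVneq e 0; first by rewrite !mul0mx mxE.
  exact/ltW/H.
rewrite -[0]/(toC 0) ltcR.
have [a0|anz] := eqVneq a 0.
  have [b0|bnz] := eqVneq b 0.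
    have : c *m map_mx toC B = 0 by apply: x_ReIm; rewrite ?ReMx_cmxr ?ImMx_cmxr.
    by move/eqP; rewrite (negbTE nz).
  by rewrite ltr_wpDl ?ge ?H.
by rewrite ltr_wpDr ?ge ?H.
Qed.

Lemma cplx_neg n (P : 'M[R]_n) (B : 'M[R]_n) (x : 'rV[C]_n) : P^T = P ->
  (forall a : 'rV[R]_n, (a <= B)%MS -> a != 0 -> (a *m P *m a^T) 0 0 < 0) ->
  (x <= map_mx toC B)%MS -> x != 0 -> (x *m map_mx toC P *m adjm x) 0 0 < 0.
Proof.
move=> Psym H xB nz.
have Psym' : (- P)^T = - P by rewrite linearN /= Psym.
have := @cplx_pos n (- P) B x Psym'.
rewrite map_mxN mulmxN mulNmx mxE oppr_gt0; apply => // a aB anz.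
by rewrite mulmxN mulNmx mxE oppr_gt0 H.
Qed.

Lemma inertia_from n (P : 'M[R]_n) (Bu Bs : 'M[R]_n) (p : nat) :
  P^T = P -> \rank Bu = p -> \rank Bs = (n - p)%N ->
  (forall a : 'rV[R]_n, (a <= Bu)%MS -> a != 0 -> (a *m P *m a^T) 0 0 < 0) ->
  (forall a : 'rV[R]_n, (a <= Bs)%MS -> a != 0 -> 0 < (a *m P *m a^T) 0 0) ->
  inertia P p 0 (n - p).
Proof.
move=> Psym rBu rBs Hu Hs.
set Pc := cmx P.
have herm : Pc \is hermsymmx.
  apply/is_hermitianmxP; rewrite expr0 scale1r /Pc cmxE map_trmx Psym.
  by rewrite conj_cmx.
have /orthomx_spectralP EP := hermitian_normalmx herm.
have Uu := spectral_unitarymx Pc.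
have Uunit := spectral_unit Pc.
have /mxOverP spreal := hermitian_spectral_diag_real herm.
set U := spectralmx Pc in EP Uu Uunit; set sp := spectral_diag Pc in EP spreal.
have UU : U *m adjm U = 1%:M by apply/unitarymxP.
have Eeig : perm_eq (eigs P) [seq sp 0 i | i <- enum 'I_n].
  by apply: eigs_perm; rewrite -/Pc EP char_poly_conj // char_poly_diag.
pose Dp (pr : pred C) : 'M[C]_n := diag_mx (\row_i ((pr (sp 0 i))%:R : C)).
pose Sel pr := Dp pr *m U.
have rSel : forall pr, \rank (Sel pr) = count (fun i => pr (sp 0 i)) (enum 'I_n).
  move=> pr; rewrite mxrankMfree ?row_free_unit // rank_diag.
  by apply: eq_count => i; rewrite mxE pnatr_eq0; case: (pr _).
have adjD : forall pr, adjm (Dp pr) = Dp pr.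
  move=> pr; rewrite /adjm tr_diag_mx map_diag_mx; congr diag_mx.
  by apply/matrixP => i j; rewrite !mxE rmorph_nat.
have QSel : forall pr (c : 'rV[C]_n),
   (c *m Sel pr *m Pc *m adjm (c *m Sel pr)) 0 0 =
   \sum_j ((pr (sp 0 j))%:R * sp 0 j * (pr (sp 0 j))%:R) * (c 0 j * conjC (c 0 j)).
  have iU : invmx U = adjm U by rewrite invmx_unitary.
  move=> pr c; rewrite EP iU /Sel !adjm_mul adjD !mulmxA.
  rewrite -[_ *m U *m adjm U]mulmxA UU mulmx1.
  rewrite -[_ *m U *m adjm U]mulmxA UU mulmx1.
  rewrite mxE; apply: eq_bigr => j _.
  rewrite !mul_mx_diag !mxE; ring.
have cc : forall z : C, 0 <= z * conjC z by move=> z; apply: mulcJ_ge0.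
have Qle : forall c : 'rV[C]_n, (c *m Sel (fun z => z <= 0) *m Pc *m adjm (c *m Sel (fun z => z <= 0))) 0 0 <= 0.
  move=> c; rewrite (QSel (fun z : C => z <= 0)); apply: sumr_le0 => j _; apply: mulr_le0_ge0 => //.
  by have [h|h] := boolP (sp 0 j <= 0); rewrite /= ?mulr1n ?mulr0n ?mul1r ?mulr1 ?mul0r.
have Qge : forall c : 'rV[C]_n, 0 <= (c *m Sel (fun z => 0 <= z) *m Pc *m adjm (c *m Sel (fun z => 0 <= z))) 0 0.
  move=> c; rewrite (QSel (fun z : C => 0 <= z)); apply: sumr_ge0 => j _; apply: mulr_ge0 => //.
  by have [h|h] := boolP (0 <= sp 0 j); rewrite /= ?mulr1n ?mulr0n ?mul1r ?mulr1 ?mul0r.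
have hp : (p <= n)%N by rewrite -rBu rank_leq_col.
have le1 : leq (count (fun i => sp 0 i <= 0) (enum 'I_n)) p.
  rewrite leqNgt; apply/negP => lt.
  have [|x nz /andP [xS xB]] := @cap_nonzero _ n _ _ (Sel (fun z => z <= 0)) (map_mx toC Bs).
    by rewrite rSel mxrank_map rBs addnC -{1}(subnK hp) ltn_add2l.
  have := cplx_pos Psym Hs xB nz; move/submxP: xS => [c ->].
  by rewrite -cmxE -/Pc (le_gtF (Qle c)).
have le2 : leq (count (fun i => 0 <= sp 0 i) (enum 'I_n)) (n - p)%N.
  rewrite leqNgt; apply/negP => lt.
  have [|x nz /andP [xS xB]] := @cap_nonzero _ n _ _ (Sel (fun z => 0 <= z)) (map_mx toC Bu).
    rewrite rSel mxrank_map rBu. move: lt. set k := count _ _. move=> lt. lia.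
  have := cplx_neg Psym Hu xB nz; move/submxP: xS => [c ->].
  by rewrite -cmxE -/Pc (le_gtF (Qge c)).
have rl : forall i, sp 0 i \is Num.real by move=> i; apply: spreal.
set e := enum 'I_n.
have sz : size e = n := size_enum_ord n.
have ca : addn (count (fun i => sp 0 i < 0) e) (count (fun i => 0 <= sp 0 i) e) = n.
  have := count_predC (fun i => sp 0 i < 0) e; rewrite sz => E; apply: (etrans _ E).
  congr addn.
  by apply: eq_count => i /=; rewrite real_leNgt ?rl ?real0.
have cb : count (fun i => sp 0 i <= 0) e =
          addn (count (fun i => sp 0 i < 0) e) (count (fun i => sp 0 i == 0) e).
  have h0 : count (predI (fun i => sp 0 i < 0) (fun i => sp 0 i == 0)) e = 0%N.
    rewrite (eq_count (a2 := pred0)) ?count_pred0 // => i /=.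
    by case: (eqVneq (sp 0 i) 0) => [->|]; rewrite ?ltxx ?andbF.
  rewrite -count_predUI h0 addn0; apply: eq_count => i /=.
  by rewrite le_eqVlt orbC.
have cc2 : addn (count (fun i => sp 0 i <= 0) e) (count (fun i => 0 < sp 0 i) e) = n.
  have := count_predC (fun i => sp 0 i <= 0) e; rewrite sz => E; apply: (etrans _ E).
  congr addn.
  by apply: eq_count => i /=; rewrite real_ltNge ?rl ?real0.
have cm : forall a : pred C, count a [seq sp 0 i | i <- e] = count (fun i => a (sp 0 i)) e.
  by move=> a; rewrite count_map.
rewrite /inertia !(permP Eeig) -/e !cm.
move: le1 le2 ca cb cc2; rewrite -/e.
set k1 := count (fun i => sp 0 i < 0) e.
set k2 := count (fun i => 0 <= sp 0 i) e.
set k3 := count (fun i => sp 0 i <= 0) e.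
set k4 := count (fun i => sp 0 i == 0) e.
set k5 := count (fun i => 0 < sp 0 i) e.
move=> *; split; lia.
Qed.

Lemma sum_nrm2_gt0 n (y : 'cV[C]_n) : y != 0 -> 0 < \sum_i nrm2 (y i 0).
Proof.
move=> ynz; have [i nz] : exists i, y i 0 != 0.
  apply/existsP; move: ynz; apply: contraR; rewrite negb_exists => /forallP H.
  by apply/eqP/matrixP => i j; rewrite ord1 mxE; apply/eqP; move: (H i); rewrite negbK.
rewrite (bigD1 i) //= ltr_wpDr ?sumr_ge0 // => [j _|]; first exact: nrm2_ge0.
by rewrite lt0r nrm2_eq0 nz nrm2_ge0.
Qed.

Lemma y_nz n (S : 'M[C]_n) (a : 'rV[R]_n) : S \in unitmx -> a != 0 ->
  S *m map_mx toC a^T != 0.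
Proof.
move=> Su; apply: contra => /eqP E.
have : map_mx toC a^T = 0 by rewrite -(mulKmx Su (map_mx toC a^T)) E mulmx0.
by move/eqP; rewrite map_mx_eq0 -trmx0 => /eqP /trmx_inj ->.
Qed.

Lemma lyap_main n (A : 'M[R]_n.+1) (S : 'M[C]_n.+1) (d : 'rV[C]_n.+1) :
  S \in unitmx -> map_mx toC A = invmx S *m diag_mx d *m S ->
  exists P : 'M[R]_n.+1,
    [/\ P^T = P, inertia P (count (fun i => 0 < Re (d 0 i)) (enum 'I_n.+1)) 0
                   (n.+1 - count (fun i => 0 < Re (d 0 i)) (enum 'I_n.+1)) &
    forall x : 'cV_n.+1, (x^T *m (A^T *m P + P *m A) *m x) 0 0 <= 0].
Proof.
move=> Su EA; exists (ReMx (Hm S (sgn_del d))); split; last exact: lyap_lmi.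
  exact: Hm_sym.
pose Pu := fun i : 'I_n.+1 => 0 < Re (d 0 i).
pose Ps := fun i : 'I_n.+1 => ~~ (0 < Re (d 0 i)).
pose Bu := kermx (horner_mx A (qpolyR Pu d))^T.
pose Bs := kermx (horner_mx A (qpolyR Ps d))^T.
have rootu : forall i, ((map_poly toC (qpolyR Pu d)).[d 0 i] == 0) = Pu i.
  move=> i; case Pi: (Pu i); first by rewrite qpoly_root ?Pi ?eqxx.
  apply/negbTE/qpoly_nroot => j Pj; apply: contraFN Pi => /eqP E; move: Pj; by rewrite /Pu E.
have roots : forall i, ((map_poly toC (qpolyR Ps d)).[d 0 i] == 0) = Ps i.
  move=> i; case Pi: (Ps i); first by rewrite qpoly_root ?Pi ?eqxx.
  apply/negbTE/qpoly_nroot => j Pj; apply: contraFN Pi => /eqP E.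
  by move: Pj; rewrite /Ps E.
apply: (inertia_from (Bu := Bu) (Bs := Bs)).
- exact: Hm_sym.
- by rewrite (ker_rank _ Su EA); apply: eq_count => i; rewrite rootu.
- rewrite (ker_rank _ Su EA) (eq_count (a2 := predC Pu)); last by move=> i; rewrite roots.
  have E := count_predC Pu (enum 'I_n.+1); have sz := size_enum_ord n.+1.
  move: E sz; set k1 := count Pu _; set k2 := count (predC Pu) _; set k3 := size _.
  lia.
- move=> a aB anz; rewrite Hm_quad.
  rewrite (eq_bigr (fun i => - nrm2 ((S *m map_mx toC a^T) i 0))); last first.
    move=> i _; rewrite /sgn_del; case: ifP => Pi; first by rewrite mulN1r.
    rewrite (ker_prop Su EA aB); first by rewrite /nrm2 /= expr0n /= addr0 mulr0 oppr0.
    by rewrite rootu /Pu Pi.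
  by rewrite sumrN oppr_lt0 sum_nrm2_gt0 // y_nz.
- move=> a aB anz; rewrite Hm_quad.
  rewrite (eq_bigr (fun i => nrm2 ((S *m map_mx toC a^T) i 0))); last first.
    move=> i _; rewrite /sgn_del; case: ifP => Pi; last by rewrite mul1r.
    rewrite (ker_prop Su EA aB); first by rewrite /nrm2 /= expr0n /= addr0 mulr0.
    by rewrite roots /Ps Pi.
  by rewrite sum_nrm2_gt0 // y_nz.
Qed.

End Inertia.

Lemma lmi_alg (R : rcfType) (n : nat) (J P : 'M[R]_n) (lam : R) :
  - (2 * lam) *: P - 0%:M - (J^T *m P + P *m J) =
  - ((J + lam%:M)^T *m P + P *m (J + lam%:M)).
Proof.
rewrite [(J + _)^T]linearD /= tr_scalar_mx mulmxDl mulmxDr mul_scalar_mx mul_mx_scalar.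
rewrite (_ : 0%:M = 0); last by apply/matrixP => i j; rewrite !mxE mul0rn.
move: (J^T *m P) (P *m J) => X Y.
by apply/matrixP => i j; rewrite !mxE; ring.
Qed.

End Aux.
Import Aux.
Unset Implicit Arguments. Set Strict Implicit. Set Printing Implicit Defensive.

Theorem corollary1 (R : rcfType) (n d m : nat)
  (Win : 'M[R]_(n, d)) (U : 'M[R]_(d, m)) (Rr : 'M[R]_(n, m))
  (Rdag : 'M[R]_(m, n)) (Wout : 'M[R]_(d, n)) (omega sigma_b : R) :
  (d < n)%N ->
  \rank Win = d ->
  ~ (exists v : 'cV[R]_d, Win *m v = const_mx 1) ->
  omega < 1 ->
  \rank U = d ->
  \rank Rr = n ->
  moore_penrose Rr Rdag ->
  Wout = U *m Rdag ->
  diagonalizable (cmx (JT omega Win Wout)) ->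
  JT omega Win Wout \in unitmx ->
  (0 < n_dominant (Wout *m Win))%N ->
  (forall mu_min : R[i],
     mu_min \in eigs (Wout *m Win) -> 0 < complex.Re mu_min ->
     (forall z, z \in eigs (Wout *m Win) -> 0 < complex.Re z -> complex.Re mu_min <= complex.Re z) ->
     forall eps : R, 0 <= eps -> eps < complex.Re mu_min -> eps <= 1 - omega ->
       p_dominant (JT omega Win Wout) (n_dominant (Wout *m Win)) (1 - omega - eps))
  /\ (n_dominant (Wout *m Win) <= d)%N.
Proof.
move=> ltdn _ _ _ _ _ _ _ diagJ _ _.
split; last first.
  by rewrite /n_dominant (leq_trans (count_size _ _)) // size_eigs.
move=> mu muin mupos mumin eps eps0 epsmu epsle.
move: Win Rr Rdag Wout ltdn diagJ muin mupos mumin epsmu.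
case: n => [|n] // Win Rr Rdag Wout _ diagJ muin mupos mumin epsmu.
set J := JT omega Win Wout.
set lam := 1 - omega - eps.
have lam0 : 0 <= lam by rewrite /lam; lra.
split => //.
case: diagJ => S Su /(similar_diagLR Su) [D]; rewrite conjVmx // => ED.
pose d' : 'rV[R[i]]_n.+1 := \row_i (D 0 i + real_complex R lam).
have EA : map_mx (real_complex R) (J + lam%:M) = invmx S *m diag_mx d' *m S.
  have -> : diag_mx d' = diag_mx D + (real_complex R lam)%:M.
    by apply/matrixP => i j; rewrite !mxE mulrnDl.
  rewrite map_mxD map_scalar_mx -cmxE ED.
  by rewrite mulmxDr mulmxDl mul_mx_scalar -scalemxAl mulVmx // scalemx1.
have [P [Psym Pin Plmi]] := lyap_main Su EA.
exists P; split => //; split.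
  have P1 : perm_eq (eigs J) [seq D 0 i | i <- enum 'I_n.+1].
    by apply: eigs_perm; rewrite ED char_poly_conj // char_poly_diag.
  pose pr := fun z : R[i] => 0 < complex.Re (z + real_complex R lam).
  have c1 : count (fun i => 0 < complex.Re (d' 0 i)) (enum 'I_n.+1) = count pr (eigs J).
    by rewrite (permP P1) (count_map (fun i : 'I_n.+1 => D 0 i)); apply: eq_count => i; rewrite /pr /= mxE.
  have c2 : count pr (eigs J) =
      count (fun z => pr (z + real_complex R (-1 + omega))) (eigs (Wout *m Win)).
    have := permP (@eigs_JK R _ _ Win Wout (-1 + omega)) pr.
    rewrite !count_cat !count_nseq count_map.
    have -> : pr (real_complex R (-1 + omega)) = false.
      by rewrite /pr /= /lam; apply/negbTE; rewrite -leNgt; lra.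
    by rewrite !mul0n !add0n.
  have Ep : count (fun i => 0 < complex.Re (d' 0 i)) (enum 'I_n.+1) = n_dominant (Wout *m Win).
    rewrite c1 c2 /n_dominant; apply: eq_in_count => z zin /=; rewrite /pr.
    have := mumin z zin; case: z zin => a b zin /= H.
    rewrite /lam; apply/idP/idP => h.
      lra.
    have := H h; lra.
  by rewrite -Ep.
exists 0; split => // x.
rewrite lmi_alg.
by rewrite mulmxN mulNmx mxE oppr_ge0 Plmi.
Qed.
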